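(* There is a computable operator $G:2^\mathbb{N}\times\mathbb{N}\to\mathbb{Q}$ such that whenever $f$ is the diagram of a linear order $L$ (with domain $\mathbb{N}$), the map $t\mapsto G(f;t)$ is a faithful embedding of $L$ into $\mathbb{R}$.
   Context: The diagram of a linear order $L=(\mathbb{N},\le_L)$ is the characteristic function of $\{\langle s,t\rangle:s\le_L t\}$ under a standard pairing. For a set $X\subseteq\mathbb{R}$, an adjacency of $X$ is a pair $a<b$ in $X$ with $(a,b)\cap X=\emptyset$. An order monomorphism $F:L\to\mathbb{R}$ is faithful if every adjacency of the closure $\overline{\operatorname{ran}(F)}$ is an adjacency of $\operatorname{ran}(F)$. *)

(* Defs.v *)
From HB Require Import structures.
From mathcomp Require Import all_boot all_order all_algebra.
From mathcomp Require Import all_classical all_reals all_analysis.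
From mathcomp Require Import Rstruct Rstruct_topology.
From Stdlib Require Import Rdefinitions.

Set Implicit Arguments.
Unset Strict Implicit.
Unset Printing Implicit Defensive.
Import Order.TTheory GRing.Theory Num.Theory.
Local Open Scope classical_set_scope.
Local Open Scope ring_scope.

(* Missing arguments default to 0; this keeps every term total and
   primitive recursive. *)
Inductive prf : Type :=
| PZero : prf
| PSucc : prf
| PProj : nat -> prf
| PComp : prf -> seq prf -> prf
| PRec  : prf -> prf -> prf.

Fixpoint prf_eval (p : prf) (xs : seq nat) {struct p} : nat :=
  match p with
  | PZero => 0%N
  | PSucc => (head 0%N xs).+1
  | PProj i => nth 0%N xs i
  | PComp g hs =>
      prf_eval g ((fix evl (l : seq prf) : seq nat :=
                     match l with
                     | [::] => [::]
                     | h :: l' => prf_eval h xs :: evl l'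
                     end) hs)
  | PRec g h =>
      let ys := behead xs in
      (fix r (n : nat) : nat :=
         match n with
         | 0 => prf_eval g ys
         | m.+1 => prf_eval h (m :: r m :: ys)
         end) (head 0%N xs)
  end.

Definition prefix_code (f : nat -> bool) (n : nat) : nat :=
  \big[addn/0%N]_(i < n) muln (nat_of_bool (f i)) (expn 2 i).

Definition int_of_nat (k : nat) : int :=
  if odd k then - (k./2.+1)%:Z else (k./2)%:Z.

(* Kleene normal form of Type-2 computability: G is computable iff there are
   primitive recursive h0, hnum, hden such that, on input the length-n prefix
   of the oracle and t, h0 <> 0 signals "halted with output
   int_of_nat(hnum)/(hden+1)"; every computation halts on some prefix and
   every halting output is the value G(f;t). *)
Definition computable_op (G : (nat -> bool) -> nat -> rat) : Prop :=
  exists h0 hnum hden : prf,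
    forall (f : nat -> bool) (t : nat),
      (exists n, prf_eval h0 [:: n; prefix_code f n; t] != 0%N) /\
      (forall n, prf_eval h0 [:: n; prefix_code f n; t] != 0%N ->
         G f t = (int_of_nat (prf_eval hnum [:: n; prefix_code f n; t]))%:~R
                 / ((prf_eval hden [:: n; prefix_code f n; t]).+1)%:R).

Definition linear_order (le : rel nat) : Prop :=
  [/\ reflexive le, antisymmetric le, transitive le & total le].

Definition cpair (s t : nat) : nat := addn (half (muln (addn s t) (addn s t).+1)) t.

Definition is_diagram (f : nat -> bool) (le : rel nat) : Prop :=
  forall s t, f (cpair s t) = le s t.

Definition order_mono (le : rel nat) (F : nat -> R) : Prop :=
  forall s t, s != t -> le s t -> F s < F t.

Definition adjacency (X : set R) (a b : R) : Prop :=
  [/\ X a, X b, a < b & forall x, a < x -> x < b -> ~ X x].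

Definition faithful (F : nat -> R) : Prop :=
  forall a b, adjacency (closure (range F)) a b -> adjacency (range F) a b.

(* Main.v *)
Require Import Defs.
From HB Require Import structures.
From mathcomp Require Import all_boot all_order all_algebra.
From mathcomp Require Import all_classical all_reals all_analysis.
From mathcomp Require Import Rstruct Rstruct_topology.
From Stdlib Require Import Rdefinitions.
From mathcomp Require Import lra ring zify.
Import Order.TTheory GRing.Theory Num.Theory.
Local Open Scope ring_scope.
Lemma eval_comp g hs xs : prf_eval (PComp g hs) xs = prf_eval g (map (fun h => prf_eval h xs) hs).
Proof. by rewrite /=; congr (prf_eval g _); elim: hs => //= h hs ->. Qed.
Lemma eval_proj i xs : prf_eval (PProj i) xs = nth 0%nat xs i.
Proof. by []. Qed.
Lemma eval_succ xs : prf_eval PSucc xs = (head 0%nat xs).+1.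
Proof. by []. Qed.

Fixpoint recv (g h : prf) (ys : seq nat) (n : nat) : nat :=
  match n with 0 => prf_eval g ys | m.+1 => prf_eval h [:: m, recv g h ys m & ys] end.
Lemma recv0 g h ys : recv g h ys 0 = prf_eval g ys. Proof. by []. Qed.
Lemma recvS g h ys m : recv g h ys m.+1 = prf_eval h [:: m, recv g h ys m & ys]. Proof. by []. Qed.

Lemma eval_rec g h x ys : prf_eval (PRec g h) (x :: ys) = recv g h ys x.
Proof. by elim: x => //= m <-. Qed.

Ltac ev := rewrite ?eval_comp ?eval_rec ?recv0 ?recvS ?eval_proj ?eval_succ; rewrite [map _ _]/= ?eval_proj ?eval_succ.

Definition addp := PRec (PProj 0) (PComp PSucc [:: PProj 1]).
Lemma addpE a b l : prf_eval addp [:: a, b & l] = addn a b.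
Proof. by rewrite /addp eval_rec; elim: a => //= a ->. Qed.
Opaque addp.
Definition mulp := PRec PZero (PComp addp [:: PProj 1; PProj 2]).
Lemma mulpE a b l : prf_eval mulp [:: a, b & l] = muln a b.
Proof. rewrite /mulp eval_rec; elim: a => [|a IH] //. rewrite recvS eval_comp /= addpE IH mulSn addnC //. Qed.
Opaque mulp.
Definition predp := PRec PZero (PProj 0).
Lemma predpE a l : prf_eval predp (a :: l) = a.-1.
Proof. by rewrite /predp eval_rec; case: a. Qed.
Opaque predp.
Definition subr := PRec (PProj 0) (PComp predp [:: PProj 1]).
Definition subp := PComp subr [:: PProj 1; PProj 0].
Lemma subpE a b l : prf_eval subp [:: a, b & l] = subn a b.
Proof.
rewrite /subp eval_comp [map _ _]/= /subr eval_rec; elim: b => [|b IH]; first by rewrite subn0.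
by rewrite recvS eval_comp /= predpE IH subnS.
Qed.
Opaque subp.
Definition halfp := PRec PZero (PComp subp [:: PProj 0; PProj 1]).
Lemma halfpE a l : prf_eval halfp (a :: l) = a./2.
Proof.
rewrite /halfp eval_rec; elim: a => [|a IH] //; rewrite recvS eval_comp /= subpE IH.
have := odd_double_half a; rewrite uphalf_half; lia.
Qed.
Opaque halfp.
Definition ihp := PRec (PProj 0) (PComp halfp [:: PProj 1]).
Lemma ihpE k c l : prf_eval ihp [:: k, c & l] = iter k half c.
Proof. by rewrite /ihp eval_rec; elim: k => [|k IH] //; rewrite recvS eval_comp /= halfpE IH. Qed.
Opaque ihp.
Fixpoint nsum (n : nat) (F : nat -> nat) : nat :=
  if n is m.+1 then addn (nsum m F) (F m) else 0%nat.
Fixpoint nprod (n : nat) (F : nat -> nat) : nat :=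
  if n is m.+1 then muln (nprod m F) (F m) else 1%nat.

Inductive expr : Type :=
| EVar of nat
| EConst of nat
| EOp of prf & expr & expr & expr
| ESum of expr & expr
| EProd of expr & expr.

Fixpoint eval (e : expr) (env : seq nat) : nat :=
  match e with
  | EVar i => nth 0%nat env i
  | EConst k => k
  | EOp p a b c => prf_eval p [:: eval a env; eval b env; eval c env]
  | ESum B body => nsum (eval B env) (fun i => eval body (i :: env))
  | EProd B body => nprod (eval B env) (fun i => eval body (i :: env))
  end.

Definition constp (k : nat) : prf := iter k (fun p => PComp PSucc [:: p]) PZero.
Lemma constpE k xs : prf_eval (constp k) xs = k.
Proof. by elim: k => //= k IH; rewrite IH. Qed.
Opaque constp.

Definition loopp (base op : prf) (body : prf) (n : nat) :=
  PRec base (PComp op [:: PProj 1; PComp body (PProj 0 :: map (fun j => PProj j.+2) (iota 0 n))]).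

Fixpoint compile (n : nat) (e : expr) : prf :=
  match e with
  | EVar i => PProj i
  | EConst k => constp k
  | EOp p a b c => PComp p [:: compile n a; compile n b; compile n c]
  | ESum B body => PComp (loopp PZero addp (compile n.+1 body) n) (compile n B :: map PProj (iota 0 n))
  | EProd B body => PComp (loopp (constp 1) mulp (compile n.+1 body) n) (compile n B :: map PProj (iota 0 n))
  end.

Lemma eval_comp2 g h1 h2 xs : prf_eval (PComp g [:: h1; h2]) xs = prf_eval g [:: prf_eval h1 xs; prf_eval h2 xs].
Proof. by []. Qed.
Lemma map_proj_self xs : map (fun j => prf_eval (PProj j) xs) (iota 0 (size xs)) = xs.
Proof. exact: (mkseq_nth 0%nat xs). Qed.
Lemma map_proj_shift m r xs :
  map (fun h => prf_eval h [:: m, r & xs]) (map (fun j => PProj j.+2) (iota 0 (size xs))) = xs.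
Proof. rewrite -map_comp; exact: (mkseq_nth 0%nat xs). Qed.

Lemma compileE e : forall xs, prf_eval (compile (size xs) e) xs = eval e xs.
Proof.
elim: e => [i|k|p a IHa b IHb c IHc|B IHB body IHbody|B IHB body IHbody] xs.
- by [].
- exact: constpE.
- by rewrite [compile _ _]/= eval_comp [map _ _]/= IHa IHb IHc.
- rewrite [compile _ _]/= eval_comp [map _ _]/= IHB -map_comp map_proj_self /loopp eval_rec.
  change (eval (ESum B body) xs) with (nsum (eval B xs) (fun i => eval body (i :: xs))).
  elim: (eval B xs) => [|m IH] //; rewrite recvS eval_comp2 eval_proj addpE IH.
  rewrite eval_comp map_cons map_proj_shift eval_proj.
  by rewrite [nth _ _ 1]/= [nth _ _ 0]/= (IHbody (m :: xs)).
- rewrite [compile _ _]/= eval_comp [map _ _]/= IHB -map_comp map_proj_self /loopp eval_rec.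
  change (eval (EProd B body) xs) with (nprod (eval B xs) (fun i => eval body (i :: xs))).
  elim: (eval B xs) => [|m IH]; first by rewrite recv0 constpE.
  rewrite recvS eval_comp2 eval_proj mulpE IH.
  rewrite eval_comp map_cons map_proj_shift eval_proj.
  by rewrite [nth _ _ 1]/= [nth _ _ 0]/= (IHbody (m :: xs)).
Qed.
Set Implicit Arguments.
Unset Strict Implicit.
Definition btw (le : rel nat) q r t := (le r q && le q t) || (le t q && le q r).
Definition ancb (le : rel nat) r t := all (fun q => ~~ btw le q r t) (iota 0 r).
Definition cc (le : rel nat) s t : nat := nsum s (fun r => nat_of_bool (ancb le r t)).
Definition hf := (2%:R : R)^-1.
Definition lo (le : rel nat) s t :=
  \sum_(0 <= r < s) (if ancb le r t && le r t then hf ^+ (cc le r t).+1 else 0).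
Definition len (le : rel nat) s t := hf ^+ (cc le s t).
Definition pos le t := lo le t t + len le t t / 2.

Lemma hf_gt0 : 0 < hf. Proof. by rewrite /hf invr_gt0. Qed.
Lemma hfS k : hf ^+ k.+1 = hf ^+ k / 2.
Proof. by rewrite exprS mulrC /hf. Qed.
Lemma len_gt0 le s t : 0 < len le s t.
Proof. exact: exprn_gt0 hf_gt0. Qed.

Lemma ccS le s t : cc le s.+1 t = addn (cc le s t) (ancb le s t).
Proof. by []. Qed.
Lemma loS le s t : lo le s.+1 t =
  lo le s t + (if ancb le s t && le s t then len le s t / 2 else 0).
Proof. by rewrite /lo big_nat_recr //= -hfS. Qed.
Lemma lenS le s t : len le s.+1 t = if ancb le s t then len le s t / 2 else len le s t.
Proof. rewrite /len ccS. case: (ancb le s t) => /=.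
- by rewrite addn1 hfS.
- by rewrite addn0.
Qed.

Lemma lo_ge0 le s t : 0 <= lo le s t.
Proof.
elim: s => [|s IH]; first by rewrite /lo big_geq.
rewrite loS; case: ifP => _; last by rewrite addr0.
by apply: addr_ge0 => //; apply: divr_ge0 => //; apply: ltW; apply: len_gt0.
Qed.

Definition hi le s t := lo le s t + len le s t.

Lemma hi_step le s t : hi le s.+1 t <= hi le s t /\ lo le s t <= lo le s.+1 t.
Proof.
rewrite /hi loS lenS; have := len_gt0 le s t.
by case: (ancb le s t); case: (le s t) => /= h; split; lra.
Qed.

Lemma hi_le1 le s t : hi le s t <= 1.
Proof.
elim: s => [|s IH]; first by rewrite /hi /lo big_geq // /len /cc /= add0r expr0.
by case: (hi_step le s t) => h _; apply: le_trans h IH.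
Qed.
Lemma lin_neg le x y : linear_order le -> x != y -> le y x = ~~ le x y.
Proof.
case=> _ anti _ tot nxy.
case Hxy: (le x y); case Hyx: (le y x) => //=.
- by move: nxy; have := anti x y; rewrite Hxy Hyx => /(_ isT) ->; rewrite eqxx.
- by move: (tot x y); rewrite Hxy Hyx.
Qed.

Lemma anc_gap (le : rel nat) (s t r : nat) : linear_order le -> (s < t)%nat -> ancb le s t -> (r < s)%nat ->
  le r s = le r t.
Proof.
move=> lin st /allP A rs.
have : r \in iota 0 s by rewrite mem_iota.
move/A; rewrite /btw.
have rs' : r != s by rewrite ltn_eqF.
have rt' : r != t by rewrite ltn_eqF // (ltn_trans rs st).
rewrite (lin_neg lin rs') (lin_neg lin rt').
by case: (le r s); case: (le r t).
Qed.

Lemma anc_eq (le : rel nat) (s t r : nat) : linear_order le -> (s < t)%nat -> ancb le s t -> (r < s)%nat ->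
  ancb le r s = ancb le r t.
Proof.
move=> lin st A rs; apply: eq_in_all => q; rewrite mem_iota /= => qr.
have qs : (q < s)%nat by apply: ltn_trans qr rs.
have qt : (q < t)%nat by apply: ltn_trans qs st.
rewrite /btw (anc_gap lin st A qs).
have qs' : q != s by rewrite ltn_eqF.
have qt' : q != t by rewrite ltn_eqF.
rewrite (lin_neg lin qs') (lin_neg lin qt').
by rewrite (anc_gap lin st A qs).
Qed.

Lemma cc_eq (le : rel nat) (s t r : nat) : linear_order le -> (s < t)%nat -> ancb le s t -> (r <= s)%nat ->
  cc le r s = cc le r t.
Proof.
move=> lin st A; elim: r => [|r IH] rs //.
by rewrite !ccS IH ?(ltnW rs) // (anc_eq lin st A rs).
Qed.

Lemma pos_anc (le : rel nat) (s t : nat) : linear_order le -> (s < t)%nat -> ancb le s t ->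
  pos le s = lo le s t + len le s t / 2.
Proof.
move=> lin st A; rewrite /pos /len (cc_eq lin st A (leqnn s)); congr (_ + _).
apply: eq_big_nat => r /andP [_ rs].
by rewrite (anc_eq lin st A rs) (anc_gap lin st A rs) (cc_eq lin st A (ltnW rs)).
Qed.
Definition mono_below (le : rel nat) n := forall x y, (x < n)%nat -> (y < n)%nat -> x != y ->
  le x y -> pos le x < pos le y.

Lemma lin_trans_eq (le : rel nat) (x y z : nat) : linear_order le -> le x y -> le y z -> le z x -> x = y.
Proof.
case=> _ anti tr _ xy yz zx.
apply: anti; rewrite xy /=; exact: tr yz zx.
Qed.

Lemma K1 (le : rel nat) (t : nat) : linear_order le -> mono_below le t -> forall s, (s <= t)%nat ->
  (forall r, (r < s)%nat -> le r t -> pos le r <= lo le s t) /\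
  (forall r, (r < s)%nat -> le t r -> hi le s t <= pos le r).
Proof.
move=> lin mb; elim=> [|s IH] st; first by split=> r.
have st' : (s < t)%nat by [].
have [IH1 IH2] := IH (ltnW st).
have [hs ls] := hi_step le s t.
have snt : s != t by rewrite ltn_eqF.
split=> r; rewrite ltnS leq_eqVlt => /orP [/eqP -> | rs] Hr.
- case A: (ancb le s t).
  + rewrite (pos_anc lin st' A) loS A Hr /=; lra.
  + rewrite loS A /=; rewrite addr0.
    have /allPn [q qin] : ~~ ancb le s t by rewrite A.
    rewrite negbK => B; move: qin; rewrite mem_iota add0n => /andP [_ qs].
    have qt : (q < t)%nat by apply: ltn_trans qs st'.
    case/orP: B => /andP [B1 B2].
    * apply: (le_trans _ (IH1 q qs B2)); apply: ltW; apply: (mb _ _ st' qt _ B1).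
      by rewrite eq_sym ltn_eqF.
    * have E := lin_trans_eq lin Hr B1 B2. by rewrite E eqxx in snt.
- by apply: le_trans (IH1 r rs Hr) ls.
- case A: (ancb le s t).
  + have nst : le s t = false.
      apply/negP => nst. have rfl : reflexive le by case: lin.
      by rewrite (lin_trans_eq lin nst Hr (rfl s)) eqxx in snt.
    rewrite /hi (pos_anc lin st' A) loS lenS A nst /=; lra.
  + rewrite /hi loS lenS A /= addr0.
    have /allPn [q qin] : ~~ ancb le s t by rewrite A.
    rewrite negbK => B; move: qin; rewrite mem_iota add0n => /andP [_ qs].
    have qt : (q < t)%nat by apply: ltn_trans qs st'.
    case/orP: B => /andP [B1 B2].
    * have E := lin_trans_eq lin B1 B2 Hr. by rewrite E ltnn in qs.
    * apply: le_trans (IH2 q qs B1) _; apply: ltW; apply: (mb _ _ qt st' _ B2).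
      by rewrite ltn_eqF.
- by apply: le_trans hs (IH2 r rs Hr).
Qed.
Lemma pos_lo le t : lo le t t < pos le t.
Proof. have := len_gt0 le t t; rewrite /pos; lra. Qed.
Lemma pos_hi le t : pos le t < hi le t t.
Proof. have := len_gt0 le t t; rewrite /pos /hi; lra. Qed.

Lemma mono_all (le : rel nat) : linear_order le -> forall n, mono_below le n.
Proof.
move=> lin; elim=> [|n IH] x y; first by [].
move=> xn yn; move: xn yn.
rewrite ltnS leq_eqVlt => /orP [/eqP -> | xn]; rewrite ltnS leq_eqVlt => /orP [/eqP -> | yn].
- by rewrite eqxx.
- move=> _ ny; have [_ K] := K1 lin IH (leqnn n).
  exact: lt_le_trans (pos_hi le n) (K y yn ny).
- move=> _ xny; have [K _] := K1 lin IH (leqnn n).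
  exact: le_lt_trans (K x xn xny) (pos_lo le n).
- exact: IH.
Qed.

Lemma pos_mono (le : rel nat) : linear_order le -> forall x y, x != y -> le x y -> pos le x < pos le y.
Proof.
move=> lin x y nxy lxy; apply: (@mono_all le lin (maxn x y).+1 x y _ _ nxy lxy).
- by rewrite ltnS leq_maxl.
- by rewrite ltnS leq_maxr.
Qed.


Lemma pos_refl (le : rel nat) : linear_order le -> forall x y, pos le x < pos le y -> le x y.
Proof.
move=> lin x y H; case: (eqVneq x y) => [E|nxy]; first by rewrite E; case: lin.
case E: (le x y) => //.
have : le y x by rewrite (lin_neg lin nxy) E.
rewrite eq_sym in nxy; move/(pos_mono lin nxy) => H'. 
by have := lt_trans H H'; rewrite ltxx.
Qed.

Lemma pos_gt0 le t : 0 < pos le t.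
Proof. exact: le_lt_trans (lo_ge0 le t t) (pos_lo le t). Qed.
Lemma pos_lt1 le t : pos le t < 1.
Proof. exact: lt_le_trans (pos_hi le t) (hi_le1 le t t). Qed.
Lemma stay (le : rel nat) (m t' : nat) : linear_order le -> forall s, (m <= s)%nat -> (s <= t')%nat ->
  (forall s', (m <= s')%nat -> (s' < s)%nat -> ~ (lo le m t' < pos le s' < hi le m t')) ->
  lo le s t' = lo le m t' /\ len le s t' = len le m t'.
Proof.
move=> lin; elim=> [|s IH] ms st H.
  by move: ms; rewrite leqn0 => /eqP ->.
move: ms; rewrite leq_eqVlt => /orP [/eqP -> // | ms].
have [E1 E2] := IH ms (ltnW st) (fun s' a b => H s' a (ltnW b)).
have A : ancb le s t' = false.
  apply/negP => A; apply: (H s ms (ltnSn s)).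
  rewrite /hi -E1 -E2 (pos_anc lin st A); have := len_gt0 le s t'.
  move=> h; apply/andP; split; lra.
by rewrite loS lenS A /= addr0 E1 E2.
Qed.

Definition Pm (le : rel nat) m (l h : R) := forall t, (m <= t)%nat -> l < pos le t -> pos le t < h ->
  lo le m t = l /\ hi le m t = h.

Definition Sset (le : rel nat) := range (pos le).

Lemma step (le : rel nat) (a b : R) m l h : linear_order le ->
  (forall x, a < x -> x < b -> ~ Sset le x) ->
  (exists t, l < pos le t < h) ->
  Pm le m l h -> (forall r, (r < m)%nat -> ~ (l < pos le r < h)) ->
  l <= a -> b <= h -> (l = 0 \/ Sset le l) -> (h = 1 \/ Sset le h) ->
  exists m' l' h', [/\ Pm le m' l' h', (forall r, (r < m')%nat -> ~ (l' < pos le r < h')),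
     l' <= a /\ b <= h', h' - l' = (h - l) / 2 & (l' = 0 \/ Sset le l') /\ (h' = 1 \/ Sset le h')].
Proof.
move=> lin gap [t0 Ht0] Pmh rm la bh Sl Sh.
pose P t := (m <= t)%nat && (l < pos le t) && (pos le t < h).
have exP : exists t, P t.
  exists t0; rewrite /P; case/andP: (Ht0) => -> ->; rewrite !andbT.
  case: (leqP m t0) => // tm; exfalso; exact: (rm t0 tm).
case: (ex_minnP exP) => t /andP [/andP [mt lt] th] minT.
have noin : forall s', (m <= s')%nat -> (s' < t)%nat -> ~ (l < pos le s' < h).
  move=> s' ms' s't /andP [h1 h2].
  have : P s' by rewrite /P ms' h1 h2.
  by move/minT; rewrite leqNgt s't.
have notin : forall r, (r < t)%nat -> ~ (l < pos le r < h).
  move=> r rt; case: (leqP m r) => mr; first exact: noin.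
  exact: rm.
have [Lm Hm] := Pmh t mt lt th.
have tr : forall t', (t <= t')%nat -> l < pos le t' -> pos le t' < h ->
    lo le t t' = l /\ len le t t' = h - l.
  move=> t' tt' l1 h1.
  have [L' H'] := Pmh t' (leq_trans mt tt') l1 h1.
  have hh : forall s', (m <= s')%nat -> (s' < t)%nat -> ~ (lo le m t' < pos le s' < hi le m t').
    by move=> s' a1 b1; rewrite L' H'; exact: noin.
  have [E1 E2] := stay lin mt tt' hh.
  split; first by rewrite E1.
  by rewrite E2 -H' /hi -L' addrC addKr.
have [Lt Nt] := tr t (leqnn t) lt th.
have post : pos le t = l + (h - l) / 2 by rewrite /pos Lt Nt.
have St : Sset le (pos le t) by exists t.
have tltt : forall t', (t < t')%nat -> t != t' by move=> t' tt'; rewrite ltn_eqF.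
have alt : pos le t <= a \/ b <= pos le t.
  case: (lerP (pos le t) a) => pa; first by left.
  case: (lerP b (pos le t)) => pb; first by right.
  by exfalso; apply: (gap _ pa pb St).
case: alt => [pa | pb].
- exists t.+1, (pos le t), h; split.
  + move=> t' tt' l1 h1.
    have l1' : l < pos le t' by apply: lt_trans l1; done.
    have [L' N'] := tr t' (ltnW tt') l1' h1.
    have le1 : le t t' by apply: (pos_refl lin).
    have A : ancb le t t'.
      apply/negPn/negP => /allPn [q]; rewrite mem_iota add0n => /andP [_ qt].
      rewrite negbK /btw => /orP [/andP [B1 B2] | /andP [B1 B2]].
      * have p1 : pos le t < pos le q.
          by apply: (pos_mono lin) => //; rewrite eq_sym ltn_eqF.
        have p2 : pos le q < pos le t'.
          apply: (pos_mono lin) => //; rewrite ltn_eqF //.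
          exact: ltn_trans qt tt'.
        apply: (notin q qt); apply/andP; split; first exact: lt_trans lt p1.
        exact: lt_trans p2 h1.
      * have E := lin_trans_eq lin le1 B1 B2.
        by move: (tltt t' tt'); rewrite E eqxx.
    rewrite /hi loS lenS A le1 /= L' N' post; split=> //; lra.
  + move=> r; rewrite ltnS leq_eqVlt => /orP [/eqP -> | rt].
      by rewrite ltxx.
    move=> /andP [r1 r2]; apply: (notin r rt); apply/andP; split=> //.
    exact: lt_trans lt r1.
  + by split.
  + rewrite post; lra.
  + by split=> //; right.
- exists t.+1, l, (pos le t); split.
  + move=> t' tt' l1 h1.
    have h1' : pos le t' < h by apply: lt_trans h1 th.
    have [L' N'] := tr t' (ltnW tt') l1 h1'.
    have le1 : le t' t by apply: (pos_refl lin).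
    have nle : le t t' = false.
      by apply/negP => H; move: le1; rewrite (lin_neg lin (tltt t' tt')) H.
    have A : ancb le t t'.
      apply/negPn/negP => /allPn [q]; rewrite mem_iota add0n => /andP [_ qt].
      rewrite negbK /btw => /orP [/andP [B1 B2] | /andP [B1 B2]].
      * have E := lin_trans_eq lin B1 B2 le1.
        by rewrite E ltnn in qt.
      * have p1 : pos le q < pos le t.
          by apply: (pos_mono lin) => //; rewrite ltn_eqF.
        have p2 : pos le t' < pos le q.
          apply: (pos_mono lin) => //; rewrite eq_sym ltn_eqF //.
          exact: ltn_trans qt tt'.
        apply: (notin q qt); apply/andP; split; first exact: lt_trans l1 p2.
        exact: lt_trans p1 th.
    rewrite /hi loS lenS A nle /= L' N' post; split=> //; lra.
  + move=> r; rewrite ltnS leq_eqVlt => /orP [/eqP -> | rt].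
      by rewrite ltxx andbF.
    move=> /andP [r1 r2]; apply: (notin r rt); apply/andP; split=> //.
    exact: lt_trans r2 th.
  + by split.
  + rewrite post; lra.
  + by split=> //; right.
Qed.
Lemma clos_approx (S : set R) (a e : R) : closure S a -> 0 < e -> exists x, S x /\ `|a - x| < e.
Proof.
move=> cl he; have := cl _ (nbhsx_ballx a e he).
by move=> [x [Sx bx]]; exists x; split.
Qed.

Lemma Spos le x : Sset le x -> 0 < x < 1.
Proof. by case=> t _ <-; rewrite pos_gt0 pos_lt1. Qed.

Lemma point (le : rel nat) (a b l h : R) : a < b ->
  closure (Sset le) a -> closure (Sset le) b ->
  (forall x, a < x -> x < b -> ~ Sset le x) -> (~ Sset le a \/ ~ Sset le b) ->
  l <= a -> b <= h -> (l = 0 \/ Sset le l) -> (h = 1 \/ Sset le h) ->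
  exists t, l < pos le t < h.
Proof.
move=> ab Ca Cb gap nS la bh Sl Sh.
have ba0 : 0 < b - a by rewrite subr_gt0.
case: nS => [nSa | nSb].
- have la' : l < a.
    rewrite lt_neqAle la andbT; apply/negP => /eqP E.
    case: Sl => [l0 | Sl]; last by apply: nSa; rewrite -E.
    have [x [Sx dx]] := clos_approx Ca ba0.
    have := Spos Sx; move: dx; rewrite -E l0 ltr_norml => /andP [d1 d2] /andP [x0 x1].
    by apply: (gap x); [rewrite -E l0 | lra |].
  pose e := Num.min (a - l) (b - a).
  have e0 : 0 < e by rewrite lt_min !subr_gt0 la' ab.
  have [e1 e2] : e <= a - l /\ e <= b - a.
    by have := le_min e (a - l) (b - a); rewrite lexx => /esym /andP.
  have [x [Sx dx]] := clos_approx Ca e0.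
  move: dx; rewrite ltr_norml => /andP [d1 d2].
  case: (ltrP x a) => xa.
    by case: Sx => t _ E; exists t; rewrite E; apply/andP; split; lra.
  case: (eqVneq x a) => [E | xa']; first by exfalso; apply: nSa; rewrite -E.
  exfalso; apply: (gap x) => //; last by lra.
  by rewrite lt_neqAle eq_sym xa' xa.
- have hb' : b < h.
    rewrite lt_neqAle bh andbT; apply/negP => /eqP E.
    case: Sh => [h1 | Sh]; last by apply: nSb; rewrite E.
    have [x [Sx dx]] := clos_approx Cb ba0.
    have := Spos Sx; move: dx; rewrite E h1 ltr_norml => /andP [d1 d2] /andP [x0 x1].
    by apply: (gap x); [lra | rewrite E h1 |].
  pose e := Num.min (h - b) (b - a).
  have e0 : 0 < e by rewrite lt_min !subr_gt0 hb' ab.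
  have [e1 e2] : e <= h - b /\ e <= b - a.
    by have := le_min e (h - b) (b - a); rewrite lexx => /esym /andP.
  have [x [Sx dx]] := clos_approx Cb e0.
  move: dx; rewrite ltr_norml => /andP [d1 d2].
  case: (ltrP b x) => bx.
    by case: Sx => t _ E; exists t; rewrite E; apply/andP; split; lra.
  case: (eqVneq x b) => [E | xb']; first by exfalso; apply: nSb; rewrite -E.
  exfalso; apply: (gap x) => //; first by lra.
  by rewrite lt_neqAle xb' bx.
Qed.
Lemma hf_pow k : hf ^+ k = ((expn 2 k)%:R)^-1.
Proof. by rewrite /hf exprVn natrX. Qed.
Lemma hf_small (e : R) : 0 < e -> exists k, hf ^+ k < e.
Proof.
move=> e0.
have ie : 0 <= e^-1 by rewrite invr_ge0 ltW.
have := archi_boundP ie; set N := Num.Def.archi_bound _ => HN.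
exists N.
have HN2 : e^-1 < (expn 2 N)%:R.
  apply: lt_trans HN _; rewrite ltr_nat; exact: (ltn_expl N (isT : (1 < 2)%nat)).
have p2 : 0 < ((expn 2 N)%:R : R) by rewrite ltr0n expn_gt0.
have -> : hf ^+ N = ((expn 2 N)%:R)^-1 by exact: hf_pow.
rewrite -(invrK e) ltf_pV2 ?posrE ?invr_gt0 //.
Qed.

Lemma pos_faithful (le : rel nat) : linear_order le -> faithful (pos le).
Proof.
move=> lin a b [Ca Cb ab gapC].
have gap : forall x, a < x -> x < b -> ~ Sset le x.
  by move=> x h1 h2 Sx; apply: (gapC x h1 h2); apply: subset_closure.
suff [Sa Sb] : Sset le a /\ Sset le b by split.
have core : ~ Sset le a \/ ~ Sset le b -> False.
  move=> nS.
  have a0 : 0 <= a.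
    rewrite leNgt; apply/negP => a0.
    have e0 : 0 < - a by rewrite oppr_gt0.
    have [x [Sx dx]] := clos_approx Ca e0.
    have := Spos Sx; move: dx; rewrite ltr_norml => /andP [d1 d2] /andP [x0 x1]; lra.
  have b1 : b <= 1.
    rewrite leNgt; apply/negP => b1.
    have e0 : 0 < b - 1 by rewrite subr_gt0.
    have [x [Sx dx]] := clos_approx Cb e0.
    have := Spos Sx; move: dx; rewrite ltr_norml => /andP [d1 d2] /andP [x0 x1]; lra.
  have claim : forall k, exists m l h, [/\ Pm le m l h, (forall r, (r < m)%nat -> ~ (l < pos le r < h)),
      l <= a /\ b <= h, h - l <= hf ^+ k & (l = 0 \/ Sset le l) /\ (h = 1 \/ Sset le h)].
    elim=> [|k [m [l [h [Pmh rm [la bh] hl [Sl Sh]]]]]].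
      exists 0%nat, 0, 1; split.
      - move=> t _ _ _; rewrite /hi /lo big_geq // /len /cc /= expr0 add0r; by split.
      - by [].
      - by split.
      - by rewrite subr0 expr0.
      - by split; left.
    have [t Ht] := point ab Ca Cb gap nS la bh Sl Sh.
    have [m' [l' [h' [P' r' [la' bh'] E [Sl' Sh']]]]] :=
      step lin gap (ex_intro _ t Ht) Pmh rm la bh Sl Sh.
    exists m', l', h'; split => //.
    rewrite E hfS; lra.
  have ba0 : 0 < b - a by rewrite subr_gt0.
  have [k hk] := hf_small ba0.
  have [m [l [h [_ _ [la bh] hl _]]]] := claim k.
  lra.
case: (pselect (Sset le a)) => Sa; case: (pselect (Sset le b)) => Sb //.
- by exfalso; apply: core; right.
- by exfalso; apply: core; left.
- by exfalso; apply: core; left.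
Qed.
Lemma compile3E e a b c : prf_eval (compile 3 e) [:: a; b; c] = eval e [:: a; b; c].
Proof. exact: (compileE e [:: a; b; c]). Qed.

Definition z := EConst 0.
Definition V := EVar.
Definition ODD x := EOp subp x (EOp mulp (EConst 2) (EOp halfp x z z) z) z.

Lemma odd_sub y : subn y (muln 2 y./2) = odd y.
Proof. have := odd_double_half y; rewrite -mul2n; lia. Qed.

Definition bitp := compile 3 (ODD (EOp ihp (V 0) (V 1) z)).
Lemma bitpE k c w : prf_eval bitp [:: k; c; w] = odd (iter k half c).
Proof. by rewrite /bitp compile3E /= subpE mulpE halfpE ihpE odd_sub. Qed.
Opaque bitp.

Definition SU := EOp addp (V 0) (V 1) z.
Definition cpairp := compile 3 (EOp addp (EOp halfp (EOp mulp SU (EOp addp SU (EConst 1) z) z) z z) (V 1) z).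
Lemma cpairpE s u w : prf_eval cpairp [:: s; u; w] = cpair s u.
Proof. by rewrite /cpairp compile3E /= !addpE halfpE mulpE addn1. Qed.
Opaque cpairp.

Definition lec (c : nat) : rel nat := fun s u => odd (iter (cpair s u) half c).
Definition lep := compile 3 (EOp bitp (EOp cpairp (V 0) (V 1) z) (V 2) z).
Lemma lepE s u c : prf_eval lep [:: s; u; c] = lec c s u.
Proof. by rewrite /lep compile3E /= cpairpE bitpE. Qed.
Opaque lep.

Lemma nprod_all P r : nprod r (fun q => nat_of_bool (P q)) = all P (iota 0 r).
Proof.
elim: r => [|r IH] //.
rewrite [nprod _ _]/= IH -addn1 iotaD all_cat /= andbT add0n.
by case: (all P _); case: (P r).
Qed.

Lemma nprod_ext n F G : (forall i, F i = G i) -> nprod n F = nprod n G.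
Proof. by move=> H; elim: n => //= n ->; rewrite H. Qed.
Lemma nsum_ext n F G : (forall i, (i < n)%nat -> F i = G i) -> nsum n F = nsum n G.
Proof. by elim: n => //= n IH H; rewrite IH ?H // => i Hi; apply: H; apply: ltnW. Qed.

Definition LE a b := EOp lep a b (V 3).
Definition ancp := compile 3 (EProd (V 0) (EOp subp (EConst 1)
  (EOp addp (EOp mulp (LE (V 1) (V 0)) (LE (V 0) (V 2)) z)
            (EOp mulp (LE (V 2) (V 0)) (LE (V 0) (V 1)) z) z) z)).
Lemma ancpE r t c : prf_eval ancp [:: r; t; c] = ancb (lec c) r t.
Proof.
rewrite /ancp compile3E /= /ancb -nprod_all; apply: nprod_ext => q.
rewrite subpE addpE !mulpE !lepE /btw.
by case: (lec c r q); case: (lec c q t); case: (lec c t q); case: (lec c q r).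
Qed.
Opaque ancp.
Definition ccp := compile 3 (ESum (V 0) (EOp ancp (V 0) (V 2) (V 3))).
Lemma ccpE r t c : prf_eval ccp [:: r; t; c] = cc (lec c) r t.
Proof. by rewrite /ccp compile3E /= /cc; apply: nsum_ext => q _; rewrite ancpE. Qed.
Opaque ccp.

Definition pow2p := compile 3 (EProd (V 0) (EConst 2)).
Lemma pow2pE k a b : prf_eval pow2p [:: k; a; b] = expn 2 k.
Proof. by rewrite /pow2p compile3E /=; elim: k => //= k ->; rewrite expnS mulnC. Qed.
Opaque pow2p.

Definition Pnum (le : rel nat) (t : nat) : nat :=
  addn (nsum t (fun r => muln (muln (ancb le r t) (le r t)) (expn 2 (subn t (cc le r t)))))
       (expn 2 (subn t (cc le t t))).

Definition pnump := compile 3 (EOp addp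
  (ESum (V 0) (EOp mulp (EOp mulp (EOp ancp (V 0) (V 1) (V 2)) (EOp lep (V 0) (V 1) (V 2)) z)
                        (EOp pow2p (EOp subp (V 1) (EOp ccp (V 0) (V 1) (V 2)) z) z z) z))
  (EOp pow2p (EOp subp (V 0) (EOp ccp (V 0) (V 0) (V 1)) z) z z) z).
Lemma pnumpE t c w : prf_eval pnump [:: t; c; w] = Pnum (lec c) t.
Proof.
rewrite /pnump compile3E /= addpE pow2pE subpE ccpE /Pnum; congr addn.
by apply: nsum_ext => r _; rewrite !mulpE ancpE lepE pow2pE subpE ccpE.
Qed.
Opaque pnump.

Definition h0p := compile 3 (EOp subp (EConst 1)
  (EOp subp (EOp addp (EOp cpairp (V 2) (V 2) z) (EConst 1) z) (V 0) z) z).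
Lemma h0pE n c t : prf_eval h0p [:: n; c; t] != 0%nat = (cpair t t < n)%nat.
Proof. rewrite /h0p compile3E /= !subpE addpE cpairpE; lia. Qed.

Definition hnump := compile 3 (EOp mulp (EConst 2) (EOp pnump (V 2) (V 1) z) z).
Lemma hnumpE n c t : prf_eval hnump [:: n; c; t] = muln 2 (Pnum (lec c) t).
Proof. by rewrite /hnump compile3E /= mulpE pnumpE. Qed.

Definition hdenp := compile 3 (EOp subp (EOp pow2p (EOp addp (V 2) (EConst 1) z) z z) (EConst 1) z).
Lemma hdenpE n c t : (prf_eval hdenp [:: n; c; t]).+1 = expn 2 t.+1.
Proof. rewrite /hdenp compile3E /= subpE pow2pE addpE addn1 subn1 prednK //; exact: expn_gt0. Qed.
Lemma iter_half i c : iter i half c = divn c (expn 2 i).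
Proof.
elim: i => [|i IH]; first by rewrite expn0 divn1.
by rewrite iterS IH -divn2 -divnMA expnSr.
Qed.

Lemma pc_S f n : prefix_code f n.+1 = addn (prefix_code f n) (muln (f n) (expn 2 n)).
Proof. by rewrite /prefix_code big_ord_recr. Qed.

Lemma pc_lt f n : (prefix_code f n < expn 2 n)%nat.
Proof.
elim: n => [|n IH]; first by rewrite /prefix_code big_ord0.
rewrite pc_S expnS; move: IH; set X := expn 2 n; case: (f n) => /=; lia.
Qed.

Lemma pc_bit f n i : (i < n)%nat -> odd (iter i half (prefix_code f n)) = f i.
Proof.
rewrite iter_half; elim: n => [|n IH] //; rewrite ltnS leq_eqVlt => /orP [/eqP -> | ilt].
  rewrite pc_S addnC divnMDl ?expn_gt0 // divn_small ?pc_lt // addn0.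
  by case: (f n).
have E : expn 2 n = muln (expn 2 i) (expn 2 (subn n i)) by rewrite -expnD subnKC // ltnW.
rewrite pc_S E mulnA addnC mulnAC divnMDl ?expn_gt0 // oddD IH // oddM oddX.
by rewrite subn_eq0 leqNgt ilt /= andbF.
Qed.

Lemma cpair_mono s u t : (s <= t)%nat -> (u <= t)%nat -> (cpair s u <= cpair t t)%nat.
Proof.
move=> st ut; rewrite /cpair; apply: leq_add => //; apply: half_leq.
apply: leq_mul; lia.
Qed.

Lemma Pnum_ext (le1 le2 : rel nat) t : (forall s u, (s <= t)%nat -> (u <= t)%nat -> le1 s u = le2 s u) ->
  Pnum le1 t = Pnum le2 t.
Proof.
move=> H.
have A : forall r, (r <= t)%nat -> ancb le1 r t = ancb le2 r t.
  move=> r rt; apply: eq_in_all => q; rewrite mem_iota add0n => /andP [_ qr].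
  have qt : (q <= t)%nat by apply: ltnW; apply: leq_trans qr rt.
  by rewrite /btw !H.
have C : forall r, (r <= t)%nat -> cc le1 r t = cc le2 r t.
  move=> r rt; apply: nsum_ext => q qr; rewrite A //; apply: ltnW; apply: leq_trans qr rt.
rewrite /Pnum C //; congr addn; apply: nsum_ext => r rt.
by rewrite A ?H ?C // ltnW.
Qed.

Lemma cc_le le r t : (cc le r t <= r)%nat.
Proof. elim: r => [|r IH] //; rewrite ccS; case: (ancb le r t) => /=; lia. Qed.

Lemma kx c t : (c <= t)%nat ->
  (expn 2 (subn t c))%:R / (expn 2 t.+1)%:R = hf ^+ c / 2.
Proof.
move=> ct.
have E : expn 2 t.+1 = muln (expn 2 (subn t c)) (expn 2 c.+1) by rewrite -expnD addnS subnK.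
rewrite E natrM invfM mulrA divff ?mul1r; last by rewrite pnatr_eq0 expn_eq0.
by rewrite -hfS /hf exprVn natrX.
Qed.

Lemma loS_T le s t : ancb le s t && le s t -> lo le s.+1 t = lo le s t + len le s t / 2.
Proof. by move=> H; rewrite /lo big_nat_recr //= H -hfS. Qed.
Lemma loS_F le s t : ~~ (ancb le s t && le s t) -> lo le s.+1 t = lo le s t.
Proof. by move=> H; rewrite /lo big_nat_recr //= (negbTE H) addr0. Qed.
Lemma nsumS n F : nsum n.+1 F = addn (nsum n F) (F n). Proof. by []. Qed.
Lemma Pnum_pos le t : (Pnum le t)%:R / (expn 2 t.+1)%:R = pos le t.
Proof.
have L : forall s, (s <= t)%nat ->
    (nsum s (fun r => muln (muln (ancb le r t) (le r t)) (expn 2 (subn t (cc le r t)))))%:R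
      / (expn 2 t.+1)%:R = lo le s t.
  elim=> [|s IH] st.
    by rewrite /lo big_geq // mul0r.
  rewrite nsumS natrD mulrDl (IH (ltnW st)).
  have cs : (cc le s t <= t)%nat by apply: leq_trans (cc_le le s t) _; exact: ltnW.
  case: (boolP (ancb le s t && le s t)) => H.
  - rewrite (loS_T H); case/andP: H => H1 H2.
    have -> : muln (muln (ancb le s t) (le s t)) (expn 2 (subn t (cc le s t))) = expn 2 (subn t (cc le s t)).
      by rewrite H1 H2 /= !mul1n.
    by rewrite kx.
  - rewrite (loS_F H).
    have -> : muln (muln (ancb le s t) (le s t)) (expn 2 (subn t (cc le s t))) = 0%nat.
      by move: H; case: (ancb le s t); case: (le s t).
    by rewrite mulr0n mul0r addr0.
rewrite /Pnum natrD mulrDl L // kx ?cc_le //.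
Qed.
Definition lef (f : nat -> bool) : rel nat := fun s u => f (cpair s u).
Definition Gop (f : nat -> bool) (t : nat) : rat := (Pnum (lef f) t)%:R / (expn 2 t.+1)%:R.

Lemma int_of_nat2 P : int_of_nat (muln 2 P) = Posz P.
Proof. by rewrite /int_of_nat mul2n odd_double doubleK. Qed.

Lemma Gop_out f n t : (cpair t t < n)%nat ->
  Gop f t = (int_of_nat (prf_eval hnump [:: n; prefix_code f n; t]))%:~R
            / ((prf_eval hdenp [:: n; prefix_code f n; t]).+1)%:R.
Proof.
move=> Hn; rewrite hnumpE hdenpE int_of_nat2 -pmulrn /Gop.
congr (_%:R / _); apply: Pnum_ext => s u st ut.
rewrite /lec /lef pc_bit //; apply: leq_ltn_trans (cpair_mono st ut) Hn.
Qed.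

Lemma Gop_comp : computable_op Gop.
Proof.
exists h0p, hnump, hdenp => f t; split.
- by exists (cpair t t).+1; rewrite h0pE.
- by move=> n; rewrite h0pE => Hn; apply: Gop_out.
Qed.

Theorem lemma5p10 :
  exists G : (nat -> bool) -> nat -> rat,
    computable_op G /\
    forall (f : nat -> bool) (le : rel nat),
      linear_order le -> is_diagram f le ->
      order_mono le (fun t => (ratr (G f t) : R)) /\
      faithful (fun t => (ratr (G f t) : R)).
Proof.
exists Gop; split; first exact: Gop_comp.
move=> f le lin dia.
have E : lef f = le by apply: funext => s; apply: funext => u; rewrite /lef dia.
have F : (fun t => (ratr (Gop f t) : R)) = pos le.
  by apply: funext => t; rewrite /Gop fmorph_div !rmorph_nat E Pnum_pos.
rewrite F; split; last exact: pos_faithful.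
by move=> s t; apply: pos_mono.
Qed.
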